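(* (i) If $z_0=(x_0,y_0)$ with $y_0\ne0$ has a $\mathbf{W}$-orbit defined for all $k$ and converging to $p_0$, then there are constants $c,C>0$ such that $c|y_k|^2\le|y_{k+1}|\le C|y_k|^2$ for all $k$, where $z_k=(x_k,y_k)$; i.e. convergence is strictly quadratic. (ii) If $z_0\in R$ with $y_0\neq 0$ has a $\mathbf{W}$-orbit defined for all $k$ and converging to a point $(x_*,0)$ with $x_*\neq 2$, then there are constants $c,C>0$ such that $c|y_k|^3\le|y_{k+1}|\le C|y_k|^3$ for all $k$; i.e. convergence is strictly cubic.
   Context: For $x>0$, $y\in\mathbb{R}$ let $r_1^2=4+x^2+4x^2y^2$, $\Delta=((x+2)^2+8x^2y^2)((x-2)^2+8x^2y^2)$ and $\omega_\pm(x,y)=\frac{x^2-4\pm\sqrt{\Delta}}{2r_1^2}$. Let $p_0=(2,0)$, $R=\{(x,y): x>0,\ 4-4y^2-x^2y^2-8x^2y^4\ge 0\}$, $R_+=R\cap((0,2]\times\mathbb{R})$, $R_-=R\cap([2,\infty)\times\mathbb{R})$, $r$ the line $x=2$. $\mathbf{W}_\pm(x,y)=\left(\frac{1+\omega_\pm}{1-\omega_\pm}x,\ \frac{|\omega_\pm|}{1+\omega_\pm}y\right)$ on $R_\pm$; $\mathbf{W}=\mathbf{W}_+$ for $x<2$, $\mathbf{W}=\mathbf{W}_-$ for $x>2$, $\mathbf{W}(p_0)=p_0$. The $\mathbf{W}$-orbit of $z_0$ is $z_{k+1}=\mathbf{W}(z_k)$, defined as long as no $z_k$ lies on $r\setminus\{p_0\}$.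 *)

(* Defs.v *)
From Stdlib Require Import Reals.
From Coquelicot Require Import Coquelicot.
Open Scope R_scope.

Definition r1sq (x y : R) : R := 4 + x^2 + 4 * x^2 * y^2.

Definition Delta (x y : R) : R :=
  ((x + 2)^2 + 8 * x^2 * y^2) * ((x - 2)^2 + 8 * x^2 * y^2).

Definition omega_plus (x y : R) : R := (x^2 - 4 + sqrt (Delta x y)) / (2 * r1sq x y).
Definition omega_minus (x y : R) : R := (x^2 - 4 - sqrt (Delta x y)) / (2 * r1sq x y).

Definition p0 : R * R := (2, 0).

Definition inR (z : R * R) : Prop :=
  0 < fst z /\
  4 - 4 * (snd z)^2 - (fst z)^2 * (snd z)^2 - 8 * (fst z)^2 * (snd z)^4 >= 0.

Definition Wpm (w : R -> R -> R) (z : R * R) : R * R :=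
  let x := fst z in let y := snd z in
  ((1 + w x y) / (1 - w x y) * x, Rabs (w x y) / (1 + w x y) * y).

(* On the line x = 2 away from
   p0 W is undefined; we return the point itself there, but orbits are only
   considered when they never hit r \ {p0} (see [orbit_defined]). *)
Definition W (z : R * R) : R * R :=
  if Rlt_dec (fst z) 2 then Wpm omega_plus z
  else if Rlt_dec 2 (fst z) then Wpm omega_minus z
  else z.

Definition orbit_defined (z : nat -> R * R) : Prop :=
  forall k, inR (z k) /\ (fst (z k) <> 2 \/ z k = p0) /\ z (S k) = W (z k).

(* Main.v *)
Require Import Defs.
From Stdlib Require Import Reals.
From Coquelicot Require Import Coquelicot.
Open Scope R_scope.
From Stdlib Require Import Lra Psatz.

Lemma Delta_id x y : Defs.Delta x y = (x^2-4)^2 + 16*x^2*y^2*r1sq x y.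
Proof. unfold Defs.Delta, r1sq. ring. Qed.

Lemma root_eq (a S Q c : R) : Q <> 0 -> S*S = a^2 + c*Q ->
  forall s, s = 1 \/ s = -1 ->
  ((a+s*S)/(2*Q))*(Q*((a+s*S)/(2*Q)) - a) = c/4.
Proof.
intros hQ hS s hs.
replace (((a+s*S)/(2*Q))*(Q*((a+s*S)/(2*Q)) - a)) with ((s*s*(S*S) - a^2)/(4*Q)) by (field; auto).
rewrite hS. destruct hs as [-> | ->]; field; auto.
Qed.

Lemma step_exists (x y : R) : 0 < x -> y <> 0 -> x <> 2 ->
  exists w, W (x,y) = ((1+w)/(1-w)*x, Rabs w/(1+w)*y) /\
    w*(r1sq x y * w - (x^2-4)) = 4*x^2*y^2 /\ (x<2 -> 0<w) /\ (2<x -> w<0).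
Proof.
intros hx hy h2.
assert (hR : 0 < r1sq x y) by (unfold r1sq; nra).
assert (hy2 : 0 < y^2) by (apply pow2_gt_0; auto).
assert (hD : 0 <= Defs.Delta x y) by (rewrite Delta_id; assert (0 <= x^2*y^2) by (apply Rmult_le_pos; nra); assert (0 <= (x^2-4)^2) by apply pow2_ge_0; nra).
set (S := sqrt (Defs.Delta x y)).
assert (hS0 : 0 <= S) by apply sqrt_pos.
assert (hSS : S*S = (x^2-4)^2 + (16*x^2*y^2)*r1sq x y) by (unfold S; rewrite sqrt_sqrt; [rewrite Delta_id; ring|auto]).
assert (hpos : 0 < 16*x^2*y^2*r1sq x y) by (assert (0<x^2) by (apply pow2_gt_0; lra); apply Rmult_lt_0_compat; [apply Rmult_lt_0_compat; lra|auto]).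
assert (hSa : Rabs (x^2-4) < S).
{ destruct (Rle_dec 0 (x^2-4)).
  - rewrite Rabs_right by lra. nra.
  - rewrite Rabs_left by lra. nra. }
assert (HE := root_eq (x^2-4) S (r1sq x y) (16*x^2*y^2) ltac:(lra) hSS).
unfold W; simpl fst.
destruct (Rlt_dec x 2) as [hl|hl].
- exists (omega_plus x y). split; [reflexivity|]. unfold omega_plus; fold S.
  assert (x^2 - 4 < 0) by nra. rewrite Rabs_left in hSa by lra.
  split.
  + replace (x^2-4+S) with (x^2-4+1*S) by ring. rewrite HE by auto. field.
  + split; intros; [apply Rdiv_lt_0_compat; lra | lra].
- destruct (Rlt_dec 2 x) as [hg|hg]; [|lra].
  exists (omega_minus x y). split; [reflexivity|]. unfold omega_minus; fold S.
  assert (0 < x^2 - 4) by nra. rewrite Rabs_right in hSa by lra.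
  split.
  + replace (x^2-4-S) with (x^2-4+(-1)*S) by ring. rewrite HE by auto. field.
  + split; intros; [lra|].
    apply Ropp_lt_cancel. rewrite Ropp_0, <- Rdiv_opp_l. apply Rdiv_lt_0_compat; lra.
Qed.

Lemma trap_lt (x Y w r : R) : 199/100 < x < 2 -> 0 < Y < 1/100 -> 0 < w < 1 -> 0 < r ->
  w*(r*w + (4-x^2)) = 4*x^2*Y^2 -> 4 - x^2 >= 2000*Y ->
  let x' := (1+w)/(1-w)*x in let Y' := w*Y/(1+w) in
  x' < 2 /\ (4 - x'^2) - Y' >= (4-x^2) - Y /\ 4 - x'^2 >= 2000*Y'.
Proof.
intros hx hY hw hr hE hA x' Y'.
assert (hrw : 0 <= r*w*w) by (apply Rmult_le_pos; [apply Rmult_le_pos|]; lra).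
assert (h1 : w*(4-x^2) <= 4*x^2*Y^2) by nra.
assert (hx2 : x^2 < 41/10) by nra.
assert (hY2 : 4*x^2*Y^2 <= 17*Y*Y) by nra.
assert (hwY : w*2000*Y <= 17*Y*Y) by nra.
assert (hw2 : w <= 17*Y/2000).
{ apply Rmult_le_reg_r with (r:=2000*Y); [lra|]. unfold Rdiv. nra. }
set (d := x' - x).
assert (hd : d*(1-w) = 2*w*x) by (unfold d, x'; field; lra).
assert (hd0 : 0 <= d) by nra.
assert (hd1 : d <= 41/10*w) by nra.
assert (hYp : Y'*(1+w) = w*Y) by (unfold Y'; field; lra).
assert (hY' : 0 <= Y' <= w*Y) by nra.
assert (hx' : x' = x + d) by (unfold d; ring).
rewrite hx'.
split; [nra|]. split; nra.
Qed.

Lemma trap_gt (x Y v r : R) : 2 < x < 201/100 -> 0 < Y < 1/100 -> 0 < v < 1 -> 0 < r ->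
  v*(r*v + (x^2-4)) = 4*x^2*Y^2 -> x^2 - 4 >= 2000*Y ->
  let x' := (1-v)/(1+v)*x in let Y' := v*Y/(1-v) in
  2 < x' /\ (x'^2 - 4) - Y' >= (x^2-4) - Y /\ x'^2 - 4 >= 2000*Y'.
Proof.
intros hx hY hw hr hE hA x' Y'.
assert (hrw : 0 <= r*v*v) by (apply Rmult_le_pos; [apply Rmult_le_pos|]; lra).
assert (h1 : v*(x^2-4) <= 4*x^2*Y^2) by nra.
assert (hx2 : x^2 < 41/10) by nra.
assert (hY2 : 4*x^2*Y^2 <= 17*Y*Y) by nra.
assert (hwY : v*2000*Y <= 17*Y*Y) by nra.
assert (hw2 : v <= 17*Y/2000).
{ apply Rmult_le_reg_r with (r:=2000*Y); [lra|]. unfold Rdiv. nra. }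
set (d := x - x').
assert (hd : d*(1+v) = 2*v*x) by (unfold d, x'; field; lra).
assert (hd0 : 0 <= d) by nra.
assert (hd1 : d <= 41/10*v) by nra.
assert (hYp : Y'*(1-v) = v*Y) by (unfold Y'; field; lra).
assert (hY' : 0 <= Y' <= 2*v*Y) by nra.
assert (hx' : x' = x - d) by (unfold d; ring).
rewrite hx'.
split; [nra|]. split; nra.
Qed.

Lemma div_ge (p q c : R) : 0 < q -> c*q <= p -> c <= p/q.
Proof. intros hq h. apply (Rmult_le_reg_r q); [lra|]. replace (p/q*q) with p by (field; lra). lra. Qed.
Lemma div_le (p q c : R) : 0 < q -> p <= c*q -> p/q <= c.
Proof. intros hq h. apply (Rmult_le_reg_r q); [lra|]. replace (p/q*q) with p by (field; lra). lra. Qed.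

Lemma near_bounds (x Y w r A : R) : 199/100 < x < 201/100 -> 0 < Y < 1/100 -> -1 < w < 1 ->
  r = 4 + x^2 + 4*x^2*Y^2 -> 0 <= A -> A < 2000*Y ->
  Rabs w * (r * Rabs w + A) = 4*x^2*Y^2 ->
  1/200 * Y^2 <= Rabs w * Y / (1+w) /\ Rabs w * Y / (1+w) <= 3 * Y^2.
Proof.
intros hx hY hw hr hA0 hA hE.
set (a := Rabs w) in *.
assert (ha0 : 0 <= a) by apply Rabs_pos.
assert (hwa : -a <= w <= a) by (unfold a; split; [apply Ropp_le_cancel; rewrite Ropp_involutive; rewrite <- Rabs_Ropp; apply RRle_abs|apply RRle_abs]).
assert (hx2 : 39/10 < x^2 < 41/10) by (split; nra).
assert (hr1 : 4 <= r <= 9) by (split; nra).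
assert (haA : 0 <= a*A) by (apply Rmult_le_pos; lra).
assert (hup : r*a*a <= 4*x^2*Y^2) by (replace (r*a*a) with (a*(r*a+A) - a*A) by ring; lra).
assert (ha1 : a <= 21/10*Y) by nra.
assert (ha2 : r*a <= 19*Y) by nra.
assert (hlo : a*(2019*Y) >= 4*x^2*Y^2) by nra.
assert (ha3 : a >= Y/136) by nra.
assert (h1w : 1+w > 0) by nra.
split.
- apply Rle_trans with (a*Y/(1+a)).
  + apply div_ge; nra.
  + unfold Rdiv. apply Rmult_le_compat_l; [nra|]. apply Rinv_le_contravar; lra.
- apply Rle_trans with (a*Y/(1-a)).
  + unfold Rdiv. apply Rmult_le_compat_l; [nra|]. apply Rinv_le_contravar; nra.
  + apply div_le; nra.
Qed.

Lemma far_bounds (x Y w r A xs g M : R) : 0 < xs -> 0 < g -> M = xs + 1 ->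
  xs/2 <= x <= M -> 0 < Y <= 1 -> -1 < w < 1 ->
  r = 4 + x^2 + 4*x^2*Y^2 -> g <= A <= M^2 + 4 -> 4*M^2*Y^2 <= g/2 ->
  Rabs w * (r * Rabs w + A) = 4*x^2*Y^2 ->
  2*xs^2/(3*(10+10*M^2)) * Y^3 <= Rabs w * Y / (1+w) /\ Rabs w * Y / (1+w) <= 8*M^2/g * Y^3.
Proof.
intros hxs hg hM hx hY hw hr hA hMY hE.
set (a := Rabs w) in *.
assert (ha0 : 0 <= a) by apply Rabs_pos.
assert (hwa : -a <= w <= a) by (unfold a; split; [apply Ropp_le_cancel; rewrite Ropp_involutive; rewrite <- Rabs_Ropp; apply RRle_abs|apply RRle_abs]).
assert (hM1 : 1 <= M) by lra.
assert (hx2 : x^2 <= M^2) by nra.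
assert (hx3 : xs^2 <= 4*x^2) by nra.
assert (hY2 : Y^2 <= 1) by nra.
assert (hr0 : 0 <= r) by nra.
assert (hrM : r <= 4 + 5*M^2) by nra.
assert (hrw : 0 <= r*a*a) by (apply Rmult_le_pos; [apply Rmult_le_pos|]; lra).
assert (hup : a*A <= 4*x^2*Y^2) by nra.
assert (hup2 : a*g <= 4*M^2*Y^2) by nra.
assert (ha1 : a <= 1/2) by nra.
assert (ha2 : a <= 4*M^2*Y^2/g) by (apply div_ge; nra).
assert (hK : r*a + A <= 10 + 10*M^2) by nra.
assert (hlo : a*(10+10*M^2) >= xs^2*Y^2) by nra.
assert (ha3 : a >= xs^2*Y^2/(10+10*M^2)).
{ apply Rle_ge. apply div_le; nra. }
assert (h1w : 1+w > 0) by nra.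
assert (hY3 : Y^3 = Y^2*Y) by ring.
split.
- apply Rle_trans with (a*Y/(3/2)).
  + rewrite hY3. unfold Rdiv in *. 
    replace (2 * xs ^ 2 * / (3 * (10 + 10 * M ^ 2)) * (Y ^ 2 * Y)) with ((xs^2*Y^2 * /(10+10*M^2))*Y * /(3/2)) by (field; nra).
    apply Rmult_le_compat_r; [lra|]. apply Rmult_le_compat_r; lra.
  + unfold Rdiv. apply Rmult_le_compat_l; [nra|]. apply Rinv_le_contravar; lra.
- apply Rle_trans with (a*Y/(1/2)).
  + unfold Rdiv. apply Rmult_le_compat_l; [nra|]. apply Rinv_le_contravar; nra.
  + rewrite hY3. unfold Rdiv in *.
    replace (8 * M ^ 2 * / g * (Y ^ 2 * Y)) with ((4*M^2*Y^2 * /g)*Y * /(1/2)) by (field; lra).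
    apply Rmult_le_compat_r; [lra|]. apply Rmult_le_compat_r; lra.
Qed.

Lemma lim_prod (z : nat -> R*R) p : filterlim z eventually (locally p) -> forall eps:posreal, exists N, forall k, (N<=k)%nat -> Rabs (fst (z k) - fst p) < eps /\ Rabs (snd (z k) - snd p) < eps.
Proof.
intros H eps. destruct (H _ (locally_ball p eps)) as [N HN]. exists N. intros k Hk.
destruct (HN k Hk) as [H1 H2]. split; [exact H1|exact H2].
Qed.

Lemma orbit_step z k : orbit_defined z -> snd (z k) <> 0 ->
  exists w, fst (z (S k)) = (1+w)/(1-w)*fst (z k) /\ snd (z (S k)) = Rabs w/(1+w)*snd (z k) /\
   w*(r1sq (fst (z k)) (snd (z k)) * w - (fst (z k)^2-4)) = 4*fst (z k)^2*snd (z k)^2 /\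
   (fst (z k)<2 -> 0<w) /\ (2<fst (z k) -> w<0) /\ 0 < fst (z k) /\ 0 < fst (z (S k)) /\ fst (z k) <> 2.
Proof.
intros hO hy.
destruct (hO k) as [[hx _] [h2 hS]].
destruct (hO (S k)) as [[hx' _] _].
assert (hne : fst (z k) <> 2).
{ destruct h2 as [h2|h2]; auto. rewrite h2 in hy. simpl in hy. lra. }
destruct (step_exists (fst (z k)) (snd (z k)) hx hy hne) as [w [hW [hE [hs1 hs2]]]].
rewrite <- surjective_pairing in hW. rewrite hW in hS.
exists w. rewrite hS; simpl. rewrite hS in hx'. simpl in hx'. repeat split; auto.
Qed.

Lemma w_range (x w : R) : 0 < x -> 0 < (1+w)/(1-w)*x -> -1 < w < 1.
Proof.
intros hx h.
destruct (Req_dec (1-w) 0) as [e|e].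
- rewrite e in h. unfold Rdiv in h. rewrite Rinv_0 in h. lra.
- set (q := (1+w)/(1-w)) in *.
  assert (hq : 0 < q) by (apply (Rmult_lt_reg_r x); lra).
  assert (hq2 : q*(1-w) = 1+w) by (unfold q; field; auto).
  split; nra.
Qed.

Lemma ynz z : orbit_defined z -> snd (z 0%nat) <> 0 -> forall k, snd (z k) <> 0.
Proof.
intros hO h0 k. induction k; auto.
destruct (orbit_step z k hO IHk) as [w [hx [hy [hE [_ [_ [h0x [h1x _]]]]]]]].
rewrite hx in h1x. destruct (w_range _ _ h0x h1x) as [w1 w2].
rewrite hy. intro hc. apply Rmult_integral in hc. destruct hc as [hc|hc]; [|auto].
assert (hw : w <> 0).
{ intro e. rewrite e in hE. assert (0 < fst (z k)^2) by (apply pow2_gt_0; lra).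
  assert (0 < snd (z k)^2) by (apply pow2_gt_0; auto). nra. }
unfold Rdiv in hc. apply Rmult_integral in hc. destruct hc as [hc|hc].
- apply hw. apply Rabs_eq_0. auto.
- apply Rinv_neq_0_compat in hc; auto. lra.
Qed.

Lemma pow2_Rabs y : Rabs y ^ 2 = y ^ 2.
Proof. replace (Rabs y ^2) with ((Rabs y)²) by (unfold Rsqr; ring). rewrite <- Rsqr_abs. unfold Rsqr; ring. Qed.

Lemma abs_eq (x y w : R) : x <> 2 -> w*(r1sq x y * w - (x^2-4)) = 4*x^2*y^2 ->
  (x<2 -> 0<w) -> (2<x -> w<0) -> 0 < x ->
  Rabs w * (r1sq x y * Rabs w + Rabs (x^2-4)) = 4*x^2*(Rabs y)^2.
Proof.
intros h2 hE h1 h3 hx. rewrite pow2_Rabs.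
destruct (Rlt_dec x 2) as [l|l].
- specialize (h1 l). rewrite Rabs_right by lra. rewrite Rabs_left by nra. rewrite <- hE. ring.
- assert (2 < x) by lra. specialize (h3 H). rewrite Rabs_left by lra. rewrite Rabs_right by nra. rewrite <- hE. ring.
Qed.

Lemma fin_bounds (Y : nat -> R) (n N : nat) (c1 C1 : R) : 0 < c1 -> 0 < C1 -> (forall k, 0 < Y k) ->
  (forall k, (N <= k)%nat -> c1 * Y k ^ n <= Y (S k) /\ Y (S k) <= C1 * Y k ^ n) ->
  exists c C, 0 < c /\ 0 < C /\ forall k, c * Y k ^ n <= Y (S k) /\ Y (S k) <= C * Y k ^ n.
Proof.
revert c1 C1. induction N as [|N IH]; intros c1 C1 hc hC hY H.
- exists c1, C1. repeat split; auto; apply H; lia.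
- assert (hp : 0 < Y N ^ n) by (apply pow_lt; auto).
  set (q := Y (S N) / Y N ^ n).
  assert (hq : 0 < q) by (apply Rdiv_lt_0_compat; auto).
  assert (hqe : q * Y N ^ n = Y (S N)) by (unfold q; field; lra).
  apply (IH (Rmin c1 q) (Rmax C1 q)).
  + apply Rmin_glb_lt; auto.
  + apply Rlt_le_trans with C1; auto. apply Rmax_l.
  + auto.
  + intros k hk. destruct (Nat.eq_dec k N) as [e|e].
    * subst k. split.
      -- rewrite <- hqe. apply Rmult_le_compat_r; [lra|apply Rmin_r].
      -- rewrite <- hqe at 1. apply Rmult_le_compat_r; [lra|apply Rmax_r].
    * assert (hk' : (S N <= k)%nat) by lia. destruct (H k hk') as [h1 h2].
      assert (0 < Y k ^ n) by (apply pow_lt; auto). split.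
      -- apply Rle_trans with (c1 * Y k ^ n); auto. apply Rmult_le_compat_r; [lra|apply Rmin_l].
      -- apply Rle_trans with (C1 * Y k ^ n); auto. apply Rmult_le_compat_r; [lra|apply Rmax_l].
Qed.

Lemma stepF z k : orbit_defined z -> (forall k, snd (z k) <> 0) ->
  exists w, fst (z (S k)) = (1+w)/(1-w)*fst (z k) /\
   Rabs (snd (z (S k))) = Rabs w * Rabs (snd (z k)) / (1+w) /\
   w*(r1sq (fst (z k)) (snd (z k)) * w - (fst (z k)^2-4)) = 4*fst (z k)^2*snd (z k)^2 /\
   Rabs w * (r1sq (fst (z k)) (snd (z k)) * Rabs w + Rabs (fst (z k)^2-4)) = 4*fst (z k)^2*(Rabs (snd (z k)))^2 /\
   (fst (z k)<2 -> 0<w) /\ (2<fst (z k) -> w<0) /\ -1 < w < 1 /\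
   0 < fst (z k) /\ 0 < fst (z (S k)) /\ fst (z k) <> 2.
Proof.
intros hO hnz.
destruct (orbit_step z k hO (hnz k)) as [w [hx [hy [hE [h1 [h2 [h0x [h1x hne]]]]]]]].
assert (hr := w_range (fst (z k)) w h0x ltac:(rewrite <- hx; auto)).
exists w. split; auto. split.
- rewrite hy, Rabs_mult, Rabs_div by lra. rewrite Rabs_Rabsolu, (Rabs_right (1+w)) by lra. field. lra.
- split; auto. split; [apply abs_eq; auto|]. repeat split; auto; lra.
Qed.

Lemma rabs_lt (a b e : R) : Rabs (a - b) < e -> b - e < a < b + e.
Proof. intro h. destruct (Rabs_def2 _ _ h). split; lra. Qed.

Lemma part1 (z : nat -> R * R) :
     snd (z 0%nat) <> 0 ->
     orbit_defined z ->
     filterlim z eventually (locally p0) ->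
     exists c C : R, 0 < c /\ 0 < C /\
       forall k : nat,
         c * (Rabs (snd (z k)))^2 <= Rabs (snd (z (S k))) /\
         Rabs (snd (z (S k))) <= C * (Rabs (snd (z k)))^2.
Proof.
intros hy0 hO hlim.
pose proof (ynz z hO hy0) as hnz.
assert (hYp : forall k, 0 < Rabs (snd (z k))) by (intro k; apply Rabs_pos_lt; auto).
assert (h100 : 0 < 1/100) by lra.
destruct (lim_prod z p0 hlim (mkposreal _ h100)) as [N hN]. simpl in hN.
assert (hNb : forall k, (N <= k)%nat -> 199/100 < fst (z k) < 201/100 /\ Rabs (snd (z k)) < 1/100).
{ intros k hk. destruct (hN k hk) as [a b]. apply rabs_lt in a. rewrite Rminus_0_r in b. split; [lra|auto]. }
assert (NT : forall k, (N <= k)%nat -> Rabs (fst (z k)^2-4) < 2000 * Rabs (snd (z k))).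
{ intros k hk. destruct (Rlt_dec (Rabs (fst (z k)^2-4)) (2000 * Rabs (snd (z k)))) as [l|l]; auto.
  exfalso.
  assert (inv : forall j, Rabs (fst (z (j+k)%nat)^2-4) >= 2000 * Rabs (snd (z (j+k)%nat)) /\
     Rabs (fst (z (j+k)%nat)^2-4) - Rabs (snd (z (j+k)%nat)) >= Rabs (fst (z k)^2-4) - Rabs (snd (z k))).
  { induction j as [|j [IH1 IH2]].
    - rewrite Nat.add_0_l. apply Rnot_lt_ge in l. split; lra.
    - replace (S j + k)%nat with (S (j+k)) by lia.
      set (m := (j+k)%nat) in *.
      destruct (stepF z m hO hnz) as [w [hx [hy [hE [hA [h1 [h2 [hw [h0x [h1x hne]]]]]]]]]].
      destruct (hNb m ltac:(unfold m; lia)) as [hxb hyb].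
      set (x := fst (z m)) in *. set (y := snd (z m)) in *.
      set (Y := Rabs y) in *.
      assert (hY0 : 0 < Y) by apply hYp.
      assert (hE' : w*(r1sq x y * w - (x^2-4)) = 4*x^2*Y^2) by (unfold Y; rewrite pow2_Rabs; auto).
      assert (hr : 0 < r1sq x y) by (unfold r1sq; assert (0 <= x^2*y^2) by (apply Rmult_le_pos; apply pow2_ge_0); nra).
      rewrite hy, hx. rewrite hx in h1x.
      destruct (Rlt_dec x 2) as [lt|lt].
      + assert (hw0 : 0 < w) by auto.
        assert (hx4 : x^2 - 4 < 0) by nra.
        rewrite Rabs_left in IH1, IH2 by lra.
        rewrite (Rabs_right w) by lra.
        destruct (trap_lt x Y w (r1sq x y) ltac:(lra) ltac:(lra) ltac:(lra) hr
           ltac:(rewrite <- hE'; ring) ltac:(lra)) as [c1 [c2 c3]].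
        assert (hx'4 : ((1+w)/(1-w)*x)^2 - 4 < 0) by nra.
        rewrite Rabs_left by lra. split; lra.
      + assert (gt : 2 < x) by lra.
        assert (hw0 : w < 0) by auto.
        assert (hx4 : x^2 - 4 > 0) by nra.
        rewrite Rabs_right in IH1, IH2 by lra.
        rewrite (Rabs_left w) by lra.
        set (v := -w).
        assert (ew : w = -v) by (unfold v; ring).
        rewrite ew in hE', hw.
        destruct (trap_gt x Y v (r1sq x y) ltac:(lra) ltac:(lra) ltac:(lra) hr
           ltac:(rewrite <- hE'; ring) ltac:(lra)) as [c1 [c2 c3]].
        rewrite ew. 
        replace ((1 + - v) / (1 - - v) * x) with ((1-v)/(1+v)*x) by (field; lra).
        replace (v * Y / (1 + - v)) with (v*Y/(1-v)) by (field; lra).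
        assert (hx'4 : ((1-v)/(1+v)*x)^2 - 4 > 0) by nra.
        rewrite Rabs_right by lra. split; lra. }
  set (Phi := Rabs (fst (z k)^2-4) - Rabs (snd (z k))).
  assert (hPhi : 0 < Phi) by (unfold Phi; specialize (hYp k); lra).
  assert (hP10 : 0 < Phi/10) by lra.
  destruct (lim_prod z p0 hlim (mkposreal _ hP10)) as [N2 hN2]. simpl in hN2.
  destruct (hN2 (N2 + k)%nat ltac:(lia)) as [a b].
  destruct (inv N2) as [_ i2]. fold Phi in i2.
  rewrite Rminus_0_r in b.
  destruct (hNb (N2+k)%nat ltac:(lia)) as [hxb _].
  set (x := fst (z (N2+k)%nat)) in *.
  assert (hA : Rabs (x^2-4) = Rabs (x-2) * (x+2)).
  { replace (x^2-4) with ((x-2)*(x+2)) by ring. rewrite Rabs_mult, (Rabs_right (x+2)) by lra. auto. }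
  assert (Rabs (x-2) * (x+2) <= Phi/10 * 5).
  { apply Rmult_le_compat; try lra. apply Rabs_pos. }
  assert (0 <= Rabs (snd (z (N2+k)%nat))) by apply Rabs_pos.
  lra. }
apply (fin_bounds (fun k => Rabs (snd (z k))) 2 N (1/200) 3); try lra; auto.
intros k hk. simpl.
destruct (stepF z k hO hnz) as [w [hx [hy [hE [hA [h1 [h2 [hw [h0x [h1x hne]]]]]]]]]].
destruct (hNb k hk) as [hxb hyb].
specialize (NT k hk).
rewrite hy.
replace (Rabs (snd (z k)) * (Rabs (snd (z k)) * 1)) with (Rabs (snd (z k))^2) by ring.
assert (hr : r1sq (fst (z k)) (snd (z k)) = 4 + fst (z k)^2 + 4*fst (z k)^2*Rabs (snd (z k))^2) by (unfold r1sq; rewrite pow2_Rabs; ring).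
destruct (near_bounds (fst (z k)) (Rabs (snd (z k))) w _ _ hxb (conj (hYp k) hyb) hw hr (Rabs_pos _) NT hA) as [u v].
split; auto.
Qed.

Lemma part2 (z : nat -> R * R) (xs : R) :
     inR (z 0%nat) ->
     snd (z 0%nat) <> 0 ->
     orbit_defined z ->
     xs <> 2 ->
     filterlim z eventually (locally (xs, 0)) ->
     exists c C : R, 0 < c /\ 0 < C /\
       forall k : nat,
         c * (Rabs (snd (z k)))^3 <= Rabs (snd (z (S k))) /\
         Rabs (snd (z (S k))) <= C * (Rabs (snd (z k)))^3.
Proof.
intros _ hy0 hO hxs hlim.
pose proof (ynz z hO hy0) as hnz.
assert (hYp : forall k, 0 < Rabs (snd (z k))) by (intro k; apply Rabs_pos_lt; auto).
assert (hxpos : 0 < xs).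
{ destruct (Rlt_dec 0 xs) as [l|l]; auto. exfalso.
  assert (h1 : 0 < 1) by lra.
  destruct (lim_prod z (xs,0) hlim (mkposreal _ h1)) as [N hN]. simpl in hN.
  assert (hlt : forall k, (N <= k)%nat -> fst (z k) < 1).
  { intros k hk. destruct (hN k hk) as [a _]. apply rabs_lt in a. lra. }
  assert (inc : forall j, fst (z N) <= fst (z (j+N)%nat)).
  { induction j as [|j IH]; [rewrite Nat.add_0_l; lra|].
    replace (S j + N)%nat with (S (j+N)) by lia.
    destruct (stepF z (j+N) hO hnz) as [w [hx [_ [_ [_ [h1' [_ [hw [h0x _]]]]]]]]].
    specialize (hlt (j+N)%nat ltac:(lia)).
    assert (0 < w) by (apply h1'; lra).
    rewrite hx.
    assert ((1+w)/(1-w)*fst (z (j+N)%nat) - fst (z (j+N)%nat) = 2*w*fst (z (j+N)%nat)/(1-w)) by (field; lra).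
    assert (0 <= 2*w*fst (z (j+N)%nat)/(1-w)) by (apply Rlt_le, Rdiv_lt_0_compat; [apply Rmult_lt_0_compat|]; lra).
    lra. }
  destruct (hO N) as [[hxN _] _].
  destruct (lim_prod z (xs,0) hlim (mkposreal _ hxN)) as [N2 hN2]. simpl in hN2.
  destruct (hN2 (N2+N)%nat ltac:(lia)) as [a _]. apply rabs_lt in a.
  specialize (inc N2). lra. }
set (g := Rabs (xs - 2)).
assert (hg : 0 < g) by (apply Rabs_pos_lt; lra).
set (M := xs + 1).
assert (hM : 1 <= M) by (unfold M; lra).
set (eps := Rmin (Rmin 1 (xs/2)) (Rmin (g/2) (g/(8*M^2)))).
assert (hM2 : 0 < 8*M^2) by nra.
assert (he : 0 < eps) by (unfold eps; repeat apply Rmin_glb_lt; try lra; apply Rdiv_lt_0_compat; lra).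
assert (he1 : eps <= 1) by (unfold eps; eapply Rle_trans; [apply Rmin_l|apply Rmin_l]).
assert (he2 : eps <= xs/2) by (unfold eps; eapply Rle_trans; [apply Rmin_l|apply Rmin_r]).
assert (he3 : eps <= g/2) by (unfold eps; eapply Rle_trans; [apply Rmin_r|apply Rmin_l]).
assert (he4 : eps <= g/(8*M^2)) by (unfold eps; eapply Rle_trans; [apply Rmin_r|apply Rmin_r]).
assert (he5 : eps * (8*M^2) <= g) by (apply Rmult_le_reg_r with (/(8*M^2)); [apply Rinv_0_lt_compat; lra|]; rewrite Rmult_assoc, Rinv_r by lra; lra).
destruct (lim_prod z (xs,0) hlim (mkposreal _ he)) as [N hN]. simpl in hN.
assert (hc : 0 < 2*xs^2/(3*(10+10*M^2))) by (apply Rdiv_lt_0_compat; nra).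
assert (hC : 0 < 8*M^2/g) by (apply Rdiv_lt_0_compat; nra).
apply (fin_bounds (fun k => Rabs (snd (z k))) 3 N _ _ hc hC); auto.
intros k hk. simpl.
destruct (stepF z k hO hnz) as [w [hx [hy [hE [hA [h1 [h2 [hw [h0x [h1x hne]]]]]]]]]].
destruct (hN k hk) as [a b]. apply rabs_lt in a. rewrite Rminus_0_r in b.
set (x := fst (z k)) in *. set (Y := Rabs (snd (z k))) in *.
assert (hr : r1sq x (snd (z k)) = 4 + x^2 + 4*x^2*Y^2) by (unfold Y, r1sq; rewrite pow2_Rabs; ring).
assert (hA1 : Rabs (x^2-4) = Rabs (x-2) * (x+2)).
{ replace (x^2-4) with ((x-2)*(x+2)) by ring. rewrite Rabs_mult, (Rabs_right (x+2)) by lra. auto. }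
assert (hx2 : g/2 <= Rabs (x-2)).
{ assert (Rabs (xs - 2) <= Rabs (xs - x) + Rabs (x-2)) by (replace (xs - 2) with ((xs - x) + (x-2)) by ring; apply Rabs_triang).
  assert (Rabs (xs - x) < eps) by (rewrite <- Rabs_Ropp; replace (-(xs-x)) with (x-xs) by ring; apply Rabs_def1; lra).
  assert (g = Rabs (xs-2)) by reflexivity. lra. }
assert (hAlo : g <= Rabs (x^2-4)) by (rewrite hA1; nra).
assert (hAhi : Rabs (x^2-4) <= M^2 + 4).
{ unfold Rabs. destruct (Rcase_abs (x^2-4)); unfold M; nra. }
assert (hY3 : 4*M^2*Y^2 <= g/2).
{ assert (0 < Y) by apply hYp. assert (Y*Y <= Y) by nra. nra. }
destruct (far_bounds x Y w _ _ xs g M hxpos hg eq_refl ltac:(unfold M; split; lra) ltac:(split; [apply hYp|lra]) hw hr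
  (conj hAlo hAhi) hY3 hA) as [u v].
rewrite hy.
replace (Y * (Y * (Y * 1))) with (Y^3) by ring.
split; auto.
Qed.

Theorem proposition5p5 :
  (forall z : nat -> R * R,
     snd (z 0%nat) <> 0 ->
     orbit_defined z ->
     filterlim z eventually (locally p0) ->
     exists c C : R, 0 < c /\ 0 < C /\
       forall k : nat,
         c * (Rabs (snd (z k)))^2 <= Rabs (snd (z (S k))) /\
         Rabs (snd (z (S k))) <= C * (Rabs (snd (z k)))^2)
  /\
  (forall (z : nat -> R * R) (xs : R),
     inR (z 0%nat) ->
     snd (z 0%nat) <> 0 ->
     orbit_defined z ->
     xs <> 2 ->
     filterlim z eventually (locally (xs, 0)) ->
     exists c C : R, 0 < c /\ 0 < C /\
       forall k : nat,
         c * (Rabs (snd (z k)))^3 <= Rabs (snd (z (S k))) /\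
         Rabs (snd (z (S k))) <= C * (Rabs (snd (z k)))^3).
Proof. split; [exact part1 | exact part2]. Qed.
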